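(* Let $k$ be a commutative ring, $A$ a commutative $k$-algebra and $m\ge1$ an integer or $m=\infty$. There is a well-defined $A$-linear map $\chi_m:\operatorname{Ider}_k(A;m)\to\operatorname{EXP}_m(\operatorname{gr}\operatorname{Diff}_{A/k})$ such that $\chi_m(\delta)=\Sigma_m(D)$ for every $\delta\in\operatorname{Ider}_k(A;m)$ and every $D\in\operatorname{HS}_k(A;m)$ with $D_1=\delta$.
   Context: $\operatorname{HS}_k(A;m)$: sequences $D=(D_0,\dots,D_m)$ of $k$-linear maps $A\to A$ with $D_0=\mathrm{Id}$, $D_i(xy)=\sum_{r+s=i}D_r(x)D_s(y)$; it is a group under $(D\circ D')_n=\sum_{i+j=n}D_i\circ D'_j$. $\operatorname{Ider}_k(A;m)$ is the set of $\delta\in\operatorname{Der}_k(A)$ with $\delta=D_1$ for some $D\in\operatorname{HS}_k(A;m)$. $\operatorname{gr}\operatorname{Diff}_{A/k}$ is the graded ring associated to the order filtration of the ring of $k$-linear differential operators of $A$, $\sigma_i$ the symbol maps, $\Sigma_m(D)=\sum_{i=0}^m\sigma_i(D_i)t^i$. For an $A$-algebra $B$, $\operatorname{EXP}_m(B)$ is the set of $\sum_{i=0}^mR_it^i\in B[[t]]/(t^{m+1})$ with $R_0=1$ and $\binom{i+j}{i}R_{i+j}=R_iR_j$ for $i+j\le m$; it is an $A$-module with addition = multiplication of series and $a\cdot\sum R_it^i=\sum a^iR_it^i$. *)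

(* Defs.v *)
From HB Require Import structures.
From mathcomp Require Import all_boot all_order all_algebra.
Set Implicit Arguments. Unset Strict Implicit. Unset Printing Implicit Defensive.
Import GRing.Theory.
Local Open Scope ring_scope.

(* Lengths m >= 1 of Hasse-Schmidt derivations: a natural number or infinity. *)
Inductive hslen := Fin of nat | Inf.

Definition le_len (i : nat) (m : hslen) : Prop :=
  match m with Fin n => (i <= n)%N | Inf => True end.

Section Diff.
(* k a commutative ring, A a commutative k-algebra given by its structure map
   phi : k -> A (a ring morphism); the k-module structure on A is c.x = phi c * x *)
Variables (k A : comPzRingType) (phi : {rmorphism k -> A}).

Definition klinear (P : A -> A) : Prop :=
  forall (c : k) (x y : A), P (phi c * x + y) = phi c * P x + P y.

Definition comm_op (P : A -> A) (a : A) : A -> A := fun x => P (a * x) - a * P x.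

(* Grothendieck's order filtration of Diff_{A/k}:
   Diff_lt n P  <->  P \in Diff^{n-1}_{A/k}, with Diff^{-1} = 0 and
   P \in Diff^{n} iff P is k-linear and [P, a] \in Diff^{n-1} for every a. *)
Fixpoint Diff_lt (n : nat) (P : A -> A) : Prop :=
  match n with
  | 0 => forall x, P x = 0
  | n'.+1 => klinear P /\ forall a : A, Diff_lt n' (comm_op P a)
  end.

Definition Diff (n : nat) (P : A -> A) : Prop := Diff_lt n.+1 P.

(* Equality of symbols of degree n in gr Diff_{A/k}:
   sigma_n(P) = sigma_n(Q) in Diff^n / Diff^{n-1}, i.e. P - Q \in Diff^{n-1}. *)
Definition sym_eq (n : nat) (P Q : A -> A) : Prop :=
  Diff_lt n (fun x => P x - Q x).

(* Hasse-Schmidt derivations of length m (only D_0, ..., D_m matter). *)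
Definition isHS (m : hslen) (D : nat -> A -> A) : Prop :=
  (forall x, D 0%N x = x) /\
  (forall i, le_len i m -> klinear (D i)) /\
  (forall i (x y : A), le_len i m ->
      D i (x * y) = \sum_(r < i.+1) D r x * D (i - r)%N y).

Definition isDer (d : A -> A) : Prop :=
  klinear d /\ forall x y, d (x * y) = x * d y + d x * y.

Definition Ider (m : hslen) (d : A -> A) : Prop :=
  isDer d /\ exists D, isHS m D /\ forall x, D 1%N x = d x.

(* A series sum_{i<=m} sigma_i(R_i) t^i with homogeneous coefficients
   (R_i \in Diff^i) lies in EXP_m(gr Diff_{A/k}):
   R_0 = 1 and binom(i+j,i) R_{i+j} = R_i R_j for i + j <= m,
   the product in gr Diff being sigma_i(P) sigma_j(Q) = sigma_{i+j}(P o Q). *)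
Definition inEXP (m : hslen) (R : nat -> A -> A) : Prop :=
  (forall i, le_len i m -> Diff i (R i)) /\
  sym_eq 0 (R 0%N) id /\
  (forall i j, le_len (i + j) m ->
     sym_eq (i + j) (fun x => R (i + j)%N x *+ 'C(i + j, i)) (fun x => R i (R j x))).

End Diff.

(* Main.v *)
Require Import Defs.
From HB Require Import structures.
From mathcomp Require Import all_boot all_order all_algebra.
From Stdlib Require Import ClassicalEpsilon Lia.
From mathcomp Require Import ssrAC.
Set Implicit Arguments. Unset Strict Implicit.
Import GRing.Theory.
Local Open Scope ring_scope.

Ltac nat_lia := repeat match goal with
  | H : is_true (_ <= _)%N |- _ => move/leP: H => H; rewrite -?plusE -?minusE in H
  | H : is_true (_ < _)%N |- _ => move/ltP: H => H; rewrite -?plusE -?minusE in H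
  end;
  try (apply/leP); rewrite -?plusE -?minusE; lia.

Section Proofs.
Variables (k A : comPzRingType) (phi : {rmorphism k -> A}).
Local Notation Dlt := (Diff_lt phi).
Local Notation klin := (klinear phi).

Lemma klin0 P : klin P -> P 0 = 0.
Proof. move=> H; have := H 1 0 0; rewrite rmorph1 !mul1r addr0 => h.
by apply: (@addrI _ (P 0)); rewrite addr0 -h. Qed.

Lemma klinD P x y : klin P -> P (x + y) = P x + P y.
Proof. by move=> H; have := H 1 x y; rewrite rmorph1 !mul1r. Qed.

Lemma klinN P x : klin P -> P (- x) = - P x.
Proof. move=> H; have := H (-1) x 0.
by rewrite rmorphN1 !mulN1r addr0 (klin0 H) addr0. Qed.

Lemma klinB P x y : klin P -> P (x - y) = P x - P y.
Proof. by move=> H; rewrite klinD // klinN. Qed.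

Lemma klinS P n (F : 'I_n -> A) : klin P -> P (\sum_(i < n) F i) = \sum_(i < n) P (F i).
Proof. move=> H; apply: (big_morph P (fun x y => klinD x y H) (klin0 H)). Qed.

Lemma klin_ext P Q : (forall x, P x = Q x) -> klin P -> klin Q.
Proof. by move=> E H c x y; rewrite -!E; exact: H. Qed.

Lemma klin_add P Q : klin P -> klin Q -> klin (fun x => P x + Q x).
Proof. by move=> HP HQ c x y; rewrite HP HQ mulrDr addrACA. Qed.

Lemma klin_mull b P : klin P -> klin (fun x => b * P x).
Proof. by move=> HP c x y; rewrite HP mulrDr mulrCA. Qed.

Lemma klin_zero : klin (fun _ => 0).
Proof. by move=> c x y; rewrite mulr0 addr0. Qed.

Lemma klin_comp P Q : klin P -> klin Q -> klin (fun x => P (Q x)).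
Proof. by move=> HP HQ c x y; rewrite HQ HP. Qed.

Lemma klin_sub P Q : klin P -> klin Q -> klin (fun x => P x - Q x).
Proof. move=> HP HQ; apply: klin_ext (klin_add HP (klin_mull (-1) HQ)) => x.
by rewrite mulN1r. Qed.

Lemma klin_sum n (F : nat -> A -> A) : (forall r, (r < n)%N -> klin (F r)) ->
  klin (fun x => \sum_(r < n) F r x).
Proof.
elim: n F => [|n IH] F H.
  by apply: klin_ext klin_zero => x; rewrite big_ord0.
apply: klin_ext (klin_add (IH F (fun r hr => H r (leqW hr))) (H n (ltnSn n))) => x.
by rewrite big_ord_recr.
Qed.

Lemma Dlt_ext n P Q : (forall x, P x = Q x) -> Dlt n P -> Dlt n Q.
Proof.
elim: n P Q => [|n IH] P Q E /=; first by move=> H x; rewrite -E.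
move=> [H1 H2]; split; first exact: klin_ext H1.
move=> a; apply: (IH (comm_op P a)) (H2 a) => x; by rewrite /comm_op !E.
Qed.

Lemma Dlt_zero n : Dlt n (fun _ => 0).
Proof.
elim: n => [|n IH] //=; split; first exact: klin_zero.
by move=> a; apply: Dlt_ext IH => x; rewrite /comm_op mulr0 subr0.
Qed.

Lemma Dlt_add n P Q : Dlt n P -> Dlt n Q -> Dlt n (fun x => P x + Q x).
Proof.
elim: n P Q => [|n IH] P Q /=; first by move=> HP HQ x; rewrite HP HQ addr0.
move=> [P1 P2] [Q1 Q2]; split; first exact: klin_add.
move=> a; apply: Dlt_ext (IH _ _ (P2 a) (Q2 a)) => x.
by rewrite /comm_op mulrDr opprD addrACA.
Qed.

Lemma Dlt_mull n b P : Dlt n P -> Dlt n (fun x => b * P x).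
Proof.
elim: n P => [|n IH] P /=; first by move=> HP x; rewrite HP mulr0.
move=> [P1 P2]; split; first exact: klin_mull.
move=> a; apply: Dlt_ext (IH _ (P2 a)) => x.
by rewrite /comm_op mulrBr [b * (a * _)]mulrCA.
Qed.

Lemma Dlt_sub n P Q : Dlt n P -> Dlt n Q -> Dlt n (fun x => P x - Q x).
Proof. move=> HP HQ; apply: Dlt_ext (Dlt_add HP (Dlt_mull (-1) HQ)) => x.
by rewrite mulN1r. Qed.

Lemma Dlt_muln n c P : Dlt n P -> Dlt n (fun x => P x *+ c).
Proof. move=> HP; apply: Dlt_ext (Dlt_mull c%:R HP) => x; by rewrite mulr_natl. Qed.

Lemma Dlt_sum n N (F : nat -> A -> A) : (forall r, (r < N)%N -> Dlt n (F r)) ->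
  Dlt n (fun x => \sum_(r < N) F r x).
Proof.
elim: N F => [|N IH] F H.
  by apply: Dlt_ext (Dlt_zero n) => x; rewrite big_ord0.
apply: Dlt_ext (Dlt_add (IH F (fun r hr => H r (leqW hr))) (H N (ltnSn N))) => x.
by rewrite big_ord_recr.
Qed.

Lemma Dlt_succ n P : Dlt n P -> Dlt n.+1 P.
Proof.
elim: n P => [|n IH] P /=.
  move=> H; split; first by move=> c x y; rewrite !H mulr0 addr0.
  by move=> a x; rewrite /comm_op !H mulr0 subr0.
by move=> [H1 H2]; split => // a; exact: IH.
Qed.

Lemma Dlt_le m n P : (m <= n)%N -> Dlt m P -> Dlt n P.
Proof.
move=> le; rewrite -(subnK le); elim: (n - m)%N => [|d IH] H //.
by rewrite addSn; apply/Dlt_succ/IH.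
Qed.

Lemma Dlt_klin n P : Dlt n.+1 P -> klin P.
Proof. by case. Qed.

Lemma comm_comp P Q a x : klin P ->
  comm_op (fun x => P (Q x)) a x = P (comm_op Q a x) + comm_op P a (Q x).
Proof. by move=> H; rewrite /comm_op (klinB _ _ H) addrA subrK. Qed.

Lemma Dlt_comp p q P Q : Dlt p P -> Dlt q.+1 Q -> Dlt (p + q) (fun x => P (Q x)).
Proof.
elim: p q P Q => [|p IHp] q P Q HP HQ.
  by move: HP => /= HP; apply: Dlt_ext (Dlt_zero _) => x; rewrite HP.
elim: q Q HQ => [|q IHq] Q HQ.
  case: HP => P1 P2; case: HQ => Q1 Q2; rewrite addn0; split.
    exact: klin_comp.
  move=> a; have := IHp 0%N _ Q (P2 a) (conj Q1 Q2); rewrite addn0 => h.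
  apply: Dlt_ext (Dlt_add (Dlt_zero p) h) => x.
  have Q0 : comm_op Q a x = 0 by exact: (Q2 a x).
  by rewrite [RHS]comm_comp // Q0 (klin0 P1) add0r.
case: HP => P1 P2; case: (HQ) => Q1 Q2; rewrite addSn; split.
  exact: klin_comp.
move=> a; apply: Dlt_ext (Dlt_add _ (IHp q.+1 _ Q (P2 a) HQ)) => [x|].
  by rewrite [RHS]comm_comp.
by rewrite -addSnnS; apply: IHq; apply: Q2.
Qed.


Lemma le_len_le i j m : (i <= j)%N -> le_len j m -> le_len i m.
Proof. by case: m => //= n; apply: leq_trans. Qed.

Definition conv (n : nat) (F : nat -> nat -> A) : A := \sum_(i < n.+1) F i (n - i)%N.

Lemma conv_ext n F G : (forall i, (i <= n)%N -> F i (n - i)%N = G i (n - i)%N) ->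
  conv n F = conv n G.
Proof. by move=> H; apply: eq_bigr => i _; apply: H; rewrite -ltnS. Qed.

Lemma conv_sym n F : conv n F = conv n (fun i j => F j i).
Proof.
rewrite /conv (reindex_inj rev_ord_inj) /=; apply: eq_bigr => i _.
by rewrite subSS subKn // -ltnS.
Qed.

Lemma conv_assoc n (F : nat -> nat -> nat -> A) :
  conv n (fun i j => conv i (fun t u => F t u j)) =
  conv n (fun t l => conv l (fun u j => F t u j)).
Proof.
elim: n F => [|n IH] F; first by rewrite /conv !big_ord1.
rewrite /conv [RHS]big_ord_recl.
have -> : \sum_(i < n.+2) \sum_(t < i.+1) F t (i - t)%N (n.+1 - i)%N =
  \sum_(i < n.+2) F 0%N i (n.+1 - i)%N +
  \sum_(i < n.+2) \sum_(t < i) F t.+1 (i - t.+1)%N (n.+1 - i)%N.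
  rewrite -big_split; apply: eq_bigr => i _; rewrite big_ord_recl subn0.
  by congr (_ + _); apply: eq_bigr => t _; rewrite lift0.
rewrite [X in _ + X = _]big_ord_recl big_ord0 add0r subn0; congr (_ + _).
have := IH (fun t => F t.+1); rewrite /conv => E.
transitivity (\sum_(i < n.+1) \sum_(t < i.+1) F t.+1 (i - t)%N (n - i)%N).
  by apply: eq_bigr => i _; rewrite lift0 subSS; apply: eq_bigr => t _; rewrite subSS.
rewrite E; apply: eq_bigr => t _; rewrite lift0 subSS.
by apply: eq_bigr => u _.
Qed.

Lemma conv_mid l (K : nat -> nat -> nat -> A) :
  conv l (fun u j => conv j (fun s v => K u s v)) =
  conv l (fun s c => conv c (fun u v => K u s v)).
Proof.
transitivity (conv l (fun w v => conv w (fun u s => K u s v))).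
  by symmetry; exact: (conv_assoc l (fun u s v => K u s v)).
transitivity (conv l (fun w v => conv w (fun s u => K u s v))).
  by apply: conv_ext => w _; exact: conv_sym.
exact: (conv_assoc l (fun s u v => K u s v)).
Qed.

Lemma conv4 n (G : nat -> nat -> nat -> nat -> A) :
  conv n (fun i j => conv i (fun t u => conv j (fun s v => G t u s v))) =
  conv n (fun p q => conv p (fun t s => conv q (fun u v => G t u s v))).
Proof.
rewrite (conv_assoc n (fun t u j => conv j (fun s v => G t u s v))).
transitivity (conv n (fun t l => conv l (fun s c => conv c (fun u v => G t u s v)))).
  by apply: conv_ext => t _; exact: (conv_mid _ (G t)).
by symmetry; exact: (conv_assoc n (fun t s c => conv c (fun u v => G t u s v))).
Qed.

Lemma subrACA (u v w z : A) : (u - v) - (w - z) = (u - w) - (v - z).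
Proof. by rewrite !opprD !opprK addrACA. Qed.

Lemma HS_comm m D i a x : isHS phi m D -> le_len i m ->
  comm_op (D i) a x = \sum_(r < i) D r.+1 a * D (i - r.+1)%N x.
Proof.
move=> [H0 [H1 H2]] hi; rewrite /comm_op H2 // big_ord_recl H0 subn0.
rewrite addrAC subrr add0r; apply: eq_bigr => r _; by rewrite lift0.
Qed.

Lemma HS_Dlt m D : isHS phi m D -> forall i, le_len i m -> Dlt i.+1 (D i).
Proof.
move=> HD; elim/ltn_ind => i IH hi /=; split; first exact: HD.2.1 _ hi.
move=> a; apply: (Dlt_ext (P := fun x => \sum_(r < i) D r.+1 a * D (i - r.+1)%N x)).
  by move=> x; rewrite (HS_comm _ _ HD hi).
apply: (Dlt_sum (F := fun r x => D r.+1 a * D (i - r.+1)%N x)) => r hr.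
apply: Dlt_mull; apply: (Dlt_le _ (IH (i - r.+1)%N _ _)); [nat_lia|nat_lia|].
by apply: le_len_le hi; nat_lia.
Qed.

Lemma HS_uniq m D E : isHS phi m D -> isHS phi m E -> (forall x, D 1%N x = E 1%N x) ->
  forall i, le_len i m -> Dlt i (fun x => D i x - E i x).
Proof.
move=> HD HE H1; elim/ltn_ind => i IH hi.
case: i IH hi => [|j] IH hi.
  by move=> x /=; rewrite HD.1 HE.1 subrr.
split; first exact: (Dlt_klin (Dlt_sub (HS_Dlt HD hi) (HS_Dlt HE hi))).
move=> a.
have E0 : forall x, comm_op (fun x => D j.+1 x - E j.+1 x) a x =
  \sum_(r < j.+1) (D r.+1 a * (D (j - r)%N x - E (j - r)%N x) +
                   (D r.+1 a - E r.+1 a) * E (j - r)%N x).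
  move=> x; transitivity (comm_op (D j.+1) a x - comm_op (E j.+1) a x).
    by rewrite /comm_op mulrBr subrACA.
  rewrite (HS_comm _ _ HD hi) (HS_comm _ _ HE hi) -sumrB; apply: eq_bigr => r _.
  by rewrite subSS mulrBr mulrBl addrA subrK.
apply: (Dlt_ext (P := fun x => \sum_(r < j.+1) (D r.+1 a * (D (j - r)%N x - E (j - r)%N x) +
                   (D r.+1 a - E r.+1 a) * E (j - r)%N x))).
  by move=> x; rewrite E0.
apply: (Dlt_sum (F := fun r x => D r.+1 a * (D (j - r)%N x - E (j - r)%N x) +
                   (D r.+1 a - E r.+1 a) * E (j - r)%N x)) => r hr; apply: Dlt_add.
  apply: Dlt_mull; apply: (Dlt_le _ (IH (j - r)%N _ _)); [nat_lia|nat_lia|].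
  by apply: le_len_le hi; nat_lia.
case: r hr => [|r] hr.
  by apply: Dlt_ext (Dlt_zero _) => x; rewrite H1 subrr mul0r.
apply: Dlt_mull; apply: (Dlt_le _ (HS_Dlt HE _)); first nat_lia.
by apply: le_len_le hi; nat_lia.
Qed.

Definition compD (D E : nat -> A -> A) : nat -> A -> A :=
  fun n x => conv n (fun i j => D i (E j x)).

Lemma compHS m D E : isHS phi m D -> isHS phi m E -> isHS phi m (compD D E).
Proof.
move=> [D0 [D1 D2]] [E0 [E1 E2]]; split; [|split].
- by move=> x; rewrite /compD /conv big_ord1 /= D0 E0.
- move=> i hi; rewrite /compD /conv.
  apply: (klin_sum (F := fun r x => D r (E (i - r)%N x))) => r hr.
  by apply: klin_comp; [apply: D1|apply: E1]; apply: le_len_le hi; nat_lia.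
move=> n x y hn.
pose G t u s v := D t (E s x) * D u (E v y).
transitivity (conv n (fun i j => conv i (fun t u => conv j (fun s v => G t u s v)))).
  apply: conv_ext => i hi.
  rewrite E2; last by apply: le_len_le hn; nat_lia.
  rewrite /conv (klinS _ (D1 _ _)); last by apply: le_len_le hn; nat_lia.
  rewrite exchange_big /=; apply: eq_bigr => s _.
  rewrite D2; last by apply: le_len_le hn; nat_lia.
  by apply: eq_bigr => t _.
rewrite conv4 {1}/conv; apply: eq_bigr => p _.
rewrite /compD /conv mulr_suml; apply: eq_bigr => t _.
by rewrite mulr_sumr.
Qed.

Definition scaleD (a : A) (D : nat -> A -> A) : nat -> A -> A :=
  fun n x => a ^+ n * D n x.

Lemma scaleHS m a D : isHS phi m D -> isHS phi m (scaleD a D).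
Proof.
move=> [D0 [D1 D2]]; split; [|split].
- by move=> x; rewrite /scaleD expr0 mul1r D0.
- by move=> i hi; apply: klin_mull; apply: D1.
move=> n x y hn; rewrite /scaleD D2 // mulr_sumr; apply: eq_bigr => r _.
by rewrite [RHS]mulrACA -exprD subnKC // -ltnS.
Qed.

Lemma derD d d' : isDer phi d -> isDer phi d' -> isDer phi (fun x => d x + d' x).
Proof.
move=> [H1 H2] [H1' H2']; split; first exact: klin_add.
by move=> x y; rewrite H2 H2' mulrDr mulrDl addrACA.
Qed.

Lemma derZ a d : isDer phi d -> isDer phi (fun x => a * d x).
Proof.
move=> [H1 H2]; split; first exact: klin_mull.
by move=> x y; rewrite H2 mulrDr [a * (x * _)]mulrCA [a * (d x * _)]mulrA.
Qed.

Lemma alg_final (b y p1 p2 e1 e2 e3 e4 : A) (c1 c2 : nat) :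
  (b * y + e1) *+ (c2 + c1) - ((b * p1 + e4 + e3) + (b * p2 + e2)) =
  (b * (y *+ c2 - p1) + b * (y *+ c1 - p2)) + (e1 *+ (c2 + c1) - e4 - e3 - e2).
Proof.
rewrite !mulrBr !mulrnAr mulrnDl mulrnDr !opprD !addrA.
by rewrite [LHS](ACl (1*4*2*7*3*5*6*8)).
Qed.

Lemma klin_muln c P : klin P -> klin (fun x => P x *+ c).
Proof. move=> H; apply: klin_ext (klin_mull c%:R H) => x; by rewrite mulr_natl. Qed.

Lemma mul_comm_op (P : A -> A) (b y : A) : P (b * y) = b * P y + comm_op P b y.
Proof. by rewrite /comm_op addrC subrK. Qed.

Lemma HS_binom m D : isHS phi m D -> forall n, le_len n m -> forall i j, (i + j)%N = n ->
  Dlt n (fun x => D n x *+ 'C(n, i) - D i (D j x)).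
Proof.
move=> HD; have [D0 [D1 D2]] := HD.
elim/ltn_ind => n IH hn i j hij.
case: i hij => [|i] hij.
  rewrite add0n in hij; subst j.
  by apply: Dlt_ext (Dlt_zero _) => x; rewrite bin0 mulr1n D0 subrr.
case: j hij => [|j] hij.
  rewrite addn0 in hij; subst n.
  by apply: Dlt_ext (Dlt_zero _) => x; rewrite binn mulr1n D0 subrr.
set N := (i + j.+1)%N.
move: hij; rewrite addSn -/N => hij; subst n.
have hN : le_len N m by exact: le_len_le (leqnSn N) hn.
have IH1 := IH N (ltnSn N) hN i.+1 j (addSnnS i j).
have IH2 := IH N (ltnSn N) hN i j.+1 erefl.
have hi : le_len i.+1 m by apply: le_len_le hn; rewrite /N; nat_lia.
have hi' : le_len i m by apply: le_len_le hn; rewrite /N; nat_lia.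
have hj : le_len j.+1 m by apply: le_len_le hn; rewrite /N; nat_lia.
have hj' : le_len j m by apply: le_len_le hn; rewrite /N; nat_lia.
split.
  by apply: klin_sub; [apply: klin_muln; apply: D1|apply: klin_comp; apply: D1].
move=> a; set b := D 1%N a.
pose E1 := fun x => \sum_(r < N) D r.+2 a * D (N - r.+1)%N x.
pose E2 := fun x => \sum_(t < i) D t.+2 a * D (i - t.+1)%N (D j.+1 x).
pose E3 := fun x => \sum_(s < j.+1) comm_op (D i.+1) (D s.+1 a) (D (j.+1 - s.+1)%N x).
pose E4 := fun x => \sum_(s < j) D s.+2 a * D i.+1 (D (j - s.+1)%N x).
have cA : forall x, comm_op (D N.+1) a x = b * D N x + E1 x.
  move=> x; rewrite (HS_comm _ _ HD hn) big_ord_recl; congr (_ + _);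
    try by [rewrite subSS subn0 | apply: eq_bigr => r _; rewrite lift0 subSS].
have cB : forall x, comm_op (D i.+1) a (D j.+1 x) = b * D i (D j.+1 x) + E2 x.
  move=> x; rewrite (HS_comm _ _ HD hi) big_ord_recl; congr (_ + _);
    try by [rewrite subSS subn0 | apply: eq_bigr => r _; rewrite lift0 subSS].
have cC : forall x, D i.+1 (comm_op (D j.+1) a x) = b * D i.+1 (D j x) + E4 x + E3 x.
  move=> x; rewrite (HS_comm _ _ HD hj) (klinS _ (D1 _ hi)).
  rewrite (eq_bigr (fun s : 'I_j.+1 => D s.+1 a * D i.+1 (D (j.+1 - s.+1)%N x) +
     comm_op (D i.+1) (D s.+1 a) (D (j.+1 - s.+1)%N x))); last first.
    by move=> s _; rewrite mul_comm_op.
  rewrite big_split /= big_ord_recl; congr (_ + _); congr (_ + _);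
    try by [rewrite subSS subn0 | apply: eq_bigr => s _; rewrite lift0 subSS].
have Ecomm : forall x,
  (b * (D N x *+ 'C(N, i.+1) - D i.+1 (D j x)) + b * (D N x *+ 'C(N, i) - D i (D j.+1 x)))
   + (E1 x *+ 'C(N.+1, i.+1) - E4 x - E3 x - E2 x) =
  comm_op (fun x => D N.+1 x *+ 'C(N.+1, i.+1) - D i.+1 (D j.+1 x)) a x.
  move=> x.
  transitivity ((comm_op (D N.+1) a x) *+ 'C(N.+1, i.+1) -
                comm_op (fun y => D i.+1 (D j.+1 y)) a x); last first.
    by rewrite /comm_op mulrBr subrACA mulrnAr mulrnBl.
  by rewrite (comm_comp _ _ _ (D1 _ hi)) cA cB cC binS alg_final.
apply: Dlt_ext Ecomm _.
apply: Dlt_add; first by apply: Dlt_add; apply: Dlt_mull.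
apply: Dlt_sub; first apply: Dlt_sub; first apply: Dlt_sub.
- apply: Dlt_muln; rewrite /E1.
  apply: (Dlt_sum (F := fun r x => D r.+2 a * D (N - r.+1)%N x)) => r hr.
  apply: Dlt_mull; apply: (Dlt_le _ (HS_Dlt HD _)); first nat_lia.
  by apply: le_len_le hn; nat_lia.
- rewrite /E4.
  apply: (Dlt_sum (F := fun s x => D s.+2 a * D i.+1 (D (j - s.+1)%N x))) => s hs.
  apply: Dlt_mull; apply: (Dlt_le _ (Dlt_comp (HS_Dlt HD hi) (HS_Dlt HD _))).
    rewrite /N; nat_lia.
  by apply: le_len_le hn; rewrite /N; nat_lia.
- rewrite /E3.
  apply: (Dlt_sum (F := fun s x => comm_op (D i.+1) (D s.+1 a) (D (j.+1 - s.+1)%N x))) => s hs.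
  have hc : Dlt i.+1 (comm_op (D i.+1) (D s.+1 a)) by exact: ((HS_Dlt HD hi).2 (D s.+1 a)).
  apply: (Dlt_le _ (Dlt_comp hc (HS_Dlt HD _))).
    rewrite /N; nat_lia.
  by apply: le_len_le hn; rewrite /N; nat_lia.
- rewrite /E2.
  apply: (Dlt_sum (F := fun t x => D t.+2 a * D (i - t.+1)%N (D j.+1 x))) => t ht.
  apply: Dlt_mull; apply: (Dlt_le _ (Dlt_comp (HS_Dlt HD _) (HS_Dlt HD hj))).
    rewrite /N; nat_lia.
  by apply: le_len_le hn; rewrite /N; nat_lia.
Qed.

Definition chi (m : hslen) (d : A -> A) : nat -> A -> A :=
  epsilon (inhabits (fun (_ : nat) (x : A) => x))
          (fun D => isHS phi m D /\ forall x, D 1%N x = d x).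

Lemma chi_spec m d : Ider phi m d -> isHS phi m (chi m d) /\ forall x, chi m d 1%N x = d x.
Proof.
move=> [_ [D HD]].
exact: (@epsilon_spec _ (inhabits (fun (_ : nat) (x : A) => x))
          (fun D => isHS phi m D /\ forall x, D 1%N x = d x) (ex_intro _ D HD)).
Qed.

End Proofs.

Theorem mainTheorem9 (k A : comPzRingType) (phi : {rmorphism k -> A})
    (m : hslen) (hm : le_len 1 m) :
  exists chi : (A -> A) -> nat -> A -> A,
    (* chi maps Ider_k(A;m) into EXP_m(gr Diff_{A/k}) *)
    (forall d, Ider phi m d -> inEXP phi m (chi d)) /\
    (* chi(delta) = Sigma_m(D) for every D in HS_k(A;m) with D_1 = delta *)
    (forall d D, Ider phi m d -> isHS phi m D -> (forall x, D 1%N x = d x) ->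
       forall i, le_len i m -> sym_eq phi i (chi d i) (D i)) /\
    (* additivity: chi(d + d') = chi(d) + chi(d') (sum in EXP = product of series) *)
    (forall d d', Ider phi m d -> Ider phi m d' ->
       Ider phi m (fun x => d x + d' x) /\
       forall n, le_len n m ->
         sym_eq phi n (chi (fun x => d x + d' x) n)
           (fun x => \sum_(i < n.+1) chi d i (chi d' (n - i)%N x))) /\
    (* A-homogeneity: chi(a d) = a . chi(d), with a . sum R_i t^i = sum a^i R_i t^i *)
    (forall (a : A) d, Ider phi m d ->
       Ider phi m (fun x => a * d x) /\
       forall n, le_len n m ->
         sym_eq phi n (chi (fun x => a * d x) n) (fun x => a ^+ n * chi d n x)).
Proof.
exists (chi phi m); split; [|split; [|split]].
- move=> d hd; have [HS H1] := chi_spec hd; split; [|split].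
  + by move=> i hi; exact: HS_Dlt HS i hi.
  + by move=> x /=; rewrite HS.1 subrr.
  + move=> i j hij; exact: (Dlt_ext (fun x => erefl) (@HS_binom _ _ _ _ _ HS (i + j)%N hij i j erefl)).
- move=> d D hd HD HD1 i hi; have [HS H1] := chi_spec hd.
  apply: HS_uniq HS HD _ i hi => x; by rewrite H1 HD1.
- move=> d d' hd hd'; have [HS H1] := chi_spec hd; have [HS' H1'] := chi_spec hd'.
  have hsum : Ider phi m (fun x => d x + d' x).
    split; first exact: derD hd.1 hd'.1.
    exists (compD (chi phi m d) (chi phi m d')); split; first exact: compHS.
    move=> x; rewrite /compD /conv big_ord_recr big_ord1 /= HS.1 HS'.1 H1 H1'.
    by rewrite addrC.
  split=> // n hn; have [HC HC1] := chi_spec hsum.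
  apply: (HS_uniq HC (compHS HS HS')) _ n hn => x.
  by rewrite HC1 /compD /conv big_ord_recr big_ord1 /= HS.1 HS'.1 H1 H1' addrC.
- move=> a d hd; have [HS H1] := chi_spec hd.
  have hsc : Ider phi m (fun x => a * d x).
    split; first exact: derZ hd.1.
    exists (scaleD a (chi phi m d)); split; first exact: scaleHS.
    by move=> x; rewrite /scaleD expr1 H1.
  split=> // n hn; have [HC HC1] := chi_spec hsc.
  apply: (HS_uniq HC (scaleHS a HS)) _ n hn => x.
  by rewrite HC1 /scaleD expr1 H1.
Qed.
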